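(* Fix $\alpha\in[0,1)$. Let $M=(r,q,u)$ be a floor-randomized, left-continuous mechanism satisfying DD. If $M$ is dominated, then there exists a floor-randomized, left-continuous mechanism $M'=(r',q',u')$ satisfying DD that dominates $M$ and satisfies $q'(\theta)r'(\theta)\le q(\theta)r(\theta)$ for all $\theta\in\Theta$.
   Context: Setting. Let $\Theta=[\underline\theta,\overline\theta]$ with $0<\underline\theta<\overline\theta$. Let $c>0$ and let $P:\mathbb R_+\to\mathbb R_+$ be continuous and strictly decreasing with $P(\overline q)=0$ for some $\overline q>0$. Put $V(q)=\int_0^q P(z)\,dz$ and $\mathrm{TS}(\theta,q)=V(q)-c-\theta q$ for $q>0$, $\mathrm{TS}(\theta,0)=0$. Assume (A2): $\mathrm{TS}(\overline\theta,P^{-1}(\overline\theta))>0$. A mechanism is a triple $M=(r,q,u)$ of functions $r:\Theta\to[0,1]$, $q:\Theta\to[0,\overline q]$, $u:\Theta\to\mathbb R$ with $q(\theta)=0$ if and only if $r(\theta)=0$. It is IC if $u(\theta)\ge u(\theta')+(\theta'-\theta)q(\theta')r(\theta')$ for all $\theta,\theta'\in\Theta$, and IR if $u(\theta)\ge 0$ for all $\theta$. (Known fact: $M$ is IC iff $\theta\mapsto q(\theta)r(\theta)$ is nonincreasing and $u(\theta)=u(\overline\theta)+\int_\theta^{\overline\theta}q(z)r(z)\,dz$ for all $\theta$; an IC mechanism is IR iff $u(\overline\theta)\ge0$.) Fix $\alpha\in[0,1)$. The regulator's surplus at $\theta$ is $\mathrm{RS}_\alpha(\theta,M)=r(\theta)\,\mathrm{TS}(\theta,q(\theta))-(1-\alpha)u(\theta)$.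 An IC and IR mechanism $\tilde M$ dominates an IC and IR mechanism $M$ if $\mathrm{RS}_\alpha(\theta,\tilde M)\ge \mathrm{RS}_\alpha(\theta,M)$ for all $\theta\in\Theta$ with strict inequality for some $\theta$; $M$ is undominated if it is IC, IR and not dominated by any IC and IR mechanism. The quantity floor $\hat q$ is the unique $q>0$ with $V(q)-qP(q)=c$. A mechanism $(r,q,u)$ is floor-randomized if it is IC, IR, $u(\overline\theta)=0$, and $\Theta$ can be partitioned into three pairwise disjoint (possibly empty) intervals $\Theta_1,\Theta_{01},\Theta_0$, with every element of $\Theta_0$ larger than every element of $\Theta_{01}$ and every element of $\Theta_{01}$ larger than every element of $\Theta_1$, such that: $q(\theta)\ge\hat q$ and $r(\theta)=1$ for $\theta\in\Theta_1$; $q(\theta)=\hat q$ and $r(\theta)\in(0,1)$ for $\theta\in\Theta_{01}$; $q(\theta)=r(\theta)=0$ for $\theta\in\Theta_0$. The efficient quantity is $q_e(\theta)=P^{-1}(\theta)$. A mechanism satisfies downward distortion (DD) if $q(\theta)\le q_e(\theta)$ for all $\theta$, with equality at $\theta=\underline\theta$. A mechanism is left continuous if $\theta\mapsto q(\theta)r(\theta)$ is left continuous at every $\theta\in(\underline\theta,\overline\theta]$. *)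

(* Defs.v *)
From Stdlib Require Import Reals Lra ClassicalEpsilon.
From Coquelicot Require Import Coquelicot.
Open Scope R_scope.

(* Parameters: P (inverse demand), qbar, c, tl = underline theta, th = overline theta. *)

Definition inTheta (tl th x : R) : Prop := tl <= x <= th.

Definition demand_ok (P : R -> R) (qbar : R) : Prop :=
  0 < qbar /\ P qbar = 0 /\
  (forall x, 0 <= x <= qbar ->
     filterlim P (within (fun y => 0 <= y <= qbar) (locally x)) (locally (P x))) /\
  (forall x y, 0 <= x -> x < y -> y <= qbar -> P y < P x).

Definition V (P : R -> R) (q : R) : R := RInt P 0 q.

Definition TS (P : R -> R) (c theta q : R) : R :=
  if Req_EM_T q 0 then 0 else V P q - c - theta * q.

(* P^{-1}(theta): the point of [0,qbar] where P equals theta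
   (unique by strict monotonicity whenever it exists). *)
Definition Pinv (P : R -> R) (qbar theta : R) : R :=
  epsilon (inhabits 0) (fun x => 0 <= x <= qbar /\ P x = theta).

Definition q_e (P : R -> R) (qbar theta : R) : R := Pinv P qbar theta.

Definition qhat (P : R -> R) (qbar c : R) : R :=
  epsilon (inhabits 0) (fun q => 0 < q <= qbar /\ V P q - q * P q = c).

Definition A2 (P : R -> R) (qbar c th : R) : Prop :=
  TS P c th (Pinv P qbar th) > 0.

Definition is_mech (qbar tl th : R) (r q u : R -> R) : Prop :=
  forall t, inTheta tl th t ->
    0 <= r t <= 1 /\ 0 <= q t <= qbar /\ (q t = 0 <-> r t = 0).

Definition IC (tl th : R) (r q u : R -> R) : Prop :=
  forall t t', inTheta tl th t -> inTheta tl th t' ->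
    u t >= u t' + (t' - t) * q t' * r t'.

Definition IR (tl th : R) (u : R -> R) : Prop :=
  forall t, inTheta tl th t -> u t >= 0.

Definition IC_IR (qbar tl th : R) (r q u : R -> R) : Prop :=
  is_mech qbar tl th r q u /\ IC tl th r q u /\ IR tl th u.

Definition RS (P : R -> R) (c alpha t : R) (r q u : R -> R) : R :=
  r t * TS P c t (q t) - (1 - alpha) * u t.

Definition dominates (P : R -> R) (qbar c tl th alpha : R)
    (r' q' u' r q u : R -> R) : Prop :=
  IC_IR qbar tl th r' q' u' /\ IC_IR qbar tl th r q u /\
  (forall t, inTheta tl th t -> RS P c alpha t r' q' u' >= RS P c alpha t r q u) /\
  (exists t, inTheta tl th t /\ RS P c alpha t r' q' u' > RS P c alpha t r q u).

Definition dominated (P : R -> R) (qbar c tl th alpha : R) (r q u : R -> R) : Prop :=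
  exists r' q' u', dominates P qbar c tl th alpha r' q' u' r q u.

Definition is_interval (S : R -> Prop) : Prop :=
  forall x y z, S x -> S z -> x <= y <= z -> S y.

Definition floor_randomized (P : R -> R) (qbar c tl th : R) (r q u : R -> R) : Prop :=
  IC_IR qbar tl th r q u /\ u th = 0 /\
  exists T1 T01 T0 : R -> Prop,
    is_interval T1 /\ is_interval T01 /\ is_interval T0 /\
    (forall t, inTheta tl th t <-> (T1 t \/ T01 t \/ T0 t)) /\
    (forall t, ~ (T1 t /\ T01 t)) /\ (forall t, ~ (T1 t /\ T0 t)) /\
    (forall t, ~ (T01 t /\ T0 t)) /\
    (forall x y, T01 x -> T0 y -> x < y) /\
    (forall x y, T1 x -> T01 y -> x < y) /\
    (forall t, T1 t -> q t >= qhat P qbar c /\ r t = 1) /\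
    (forall t, T01 t -> q t = qhat P qbar c /\ 0 < r t < 1) /\
    (forall t, T0 t -> q t = 0 /\ r t = 0).

Definition DD (P : R -> R) (qbar tl th : R) (q : R -> R) : Prop :=
  (forall t, inTheta tl th t -> q t <= q_e P qbar t) /\ q tl = q_e P qbar tl.

Definition left_continuous (tl th : R) (r q : R -> R) : Prop :=
  forall t, tl < t <= th ->
    filterlim (fun s => q s * r s) (at_left t) (locally (q t * r t)).

(* Main.v *)
Require Import Defs.
From Stdlib Require Import Reals Lra ClassicalEpsilon.
From Coquelicot Require Import Coquelicot.
Open Scope R_scope.


Lemma ballR (x e y : R) : ball x e y <-> Rabs (y - x) < e.
Proof. split; intro H; exact H. Qed.

Definition clamp (qbar y : R) : R := Rmax 0 (Rmin y qbar).

Lemma clamp_in qbar y : 0 <= qbar -> 0 <= clamp qbar y <= qbar.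
Proof. intros; unfold clamp, Rmax, Rmin; repeat destruct Rle_dec; lra. Qed.

Lemma clamp_id qbar y : 0 <= y <= qbar -> clamp qbar y = y.
Proof. intros; unfold clamp, Rmax, Rmin; repeat destruct Rle_dec; lra. Qed.

Lemma clamp_lip qbar y z : 0 <= qbar -> Rabs (clamp qbar y - clamp qbar z) <= Rabs (y - z).
Proof. intros; unfold clamp, Rmax, Rmin; repeat destruct Rle_dec;
  unfold Rabs; repeat destruct Rcase_abs; lra. Qed.

Lemma Pc_cont P qbar (hP : demand_ok P qbar) a :
  continuity_pt (fun y => P (clamp qbar y)) a.
Proof.
  destruct hP as [hq [_ [hc _]]].
  apply continuity_pt_filterlim.
  apply (filterlim_comp _ _ _ (clamp qbar) P _ (within (fun y => 0 <= y <= qbar) (locally (clamp qbar a)))).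
  - intros Q [eps He]. exists eps. intros y Hy. apply He.
    + apply ballR. apply ballR in Hy. eapply Rle_lt_trans. apply clamp_lip; lra. exact Hy.
    + apply clamp_in; lra.
  - apply hc. apply clamp_in; lra.
Qed.

Lemma P_nonneg P qbar (hP : demand_ok P qbar) y : 0 <= y <= qbar -> 0 <= P y.
Proof.
  destruct hP as [hq [h0 [_ hd]]]. intros Hy.
  destruct (Req_dec y qbar) as [->|]; [lra|]. rewrite <- h0. left; apply hd; lra.
Qed.

Lemma P_dec P qbar (hP : demand_ok P qbar) x y : 0 <= x -> x <= y -> y <= qbar -> P y <= P x.
Proof.
  destruct hP as [hq [h0 [_ hd]]]. intros.
  destruct (Req_dec x y) as [->|]; [lra|]. left; apply hd; lra.
Qed.

Lemma exRInt_P P qbar (hP : demand_ok P qbar) a b :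
  0 <= a -> a <= b -> b <= qbar -> ex_RInt P a b.
Proof.
  intros. apply (ex_RInt_ext (fun y => P (clamp qbar y))).
  - intros x Hx. rewrite Rmin_left in Hx by lra. rewrite Rmax_right in Hx by lra.
    rewrite clamp_id; auto; lra.
  - apply (@ex_RInt_continuous R_CompleteNormedModule). intros z _. apply continuity_pt_filterlim. apply (Pc_cont P qbar hP).
Qed.

Lemma V_diff P qbar (hP : demand_ok P qbar) a b :
  0 <= a -> a <= b -> b <= qbar -> V P b - V P a = RInt P a b.
Proof.
  intros. unfold V.
  assert (Hc := RInt_Chasles P 0 a b (exRInt_P P qbar hP 0 a ltac:(lra) ltac:(lra) ltac:(lra))
     (exRInt_P P qbar hP a b ltac:(lra) ltac:(lra) ltac:(lra))).
  change (plus (RInt P 0 a) (RInt P a b)) with (RInt P 0 a + RInt P a b) in Hc. lra.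
Qed.

Lemma V_bounds P qbar (hP : demand_ok P qbar) a b :
  0 <= a -> a <= b -> b <= qbar ->
  (b - a) * P b <= V P b - V P a <= (b - a) * P a.
Proof.
  intros. rewrite (V_diff P qbar hP a b) by lra.
  assert (HI := exRInt_P P qbar hP a b H H0 H1).
  split.
  - replace ((b - a) * P b) with (RInt (fun _ => P b) a b).
    + apply RInt_le; auto. apply ex_RInt_const. intros x Hx. apply (P_dec P qbar hP); lra.
    + rewrite RInt_const. reflexivity.
  - replace ((b - a) * P a) with (RInt (fun _ => P a) a b).
    + apply RInt_le; auto. apply ex_RInt_const. intros x Hx. apply (P_dec P qbar hP); lra.
    + rewrite RInt_const. reflexivity.
Qed.

Lemma V0 P : V P 0 = 0.
Proof. unfold V. rewrite RInt_point. reflexivity. Qed.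

Lemma lip_cont (f : R -> R) (K : R) x : 0 <= K ->
  (forall y, Rabs (f y - f x) <= K * Rabs (y - x)) -> continuity_pt f x.
Proof.
  intros HK H. apply continuity_pt_filterlim. apply filterlim_locally.
  intros eps. assert (He : 0 < eps / (K + 1)).
  { apply Rdiv_lt_0_compat. apply cond_pos. lra. }
  exists (mkposreal _ He). intros y Hy. apply ballR in Hy. apply ballR. simpl in Hy.
  eapply Rle_lt_trans. apply H.
  apply Rle_lt_trans with ((K+1) * Rabs (y - x)).
  { assert (0 <= Rabs (y - x)) by apply Rabs_pos. nra. }
  apply Rmult_lt_reg_l with (/ (K+1)). apply Rinv_0_lt_compat; lra.
  rewrite <- Rmult_assoc, Rinv_l by lra. rewrite Rmult_1_l.
  unfold Rdiv in Hy. rewrite Rmult_comm. exact Hy.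
Qed.

Lemma Vc_cont P qbar (hP : demand_ok P qbar) x : continuity_pt (fun y => V P (clamp qbar y)) x.
Proof.
  assert (hq : 0 < qbar) by apply hP.
  apply lip_cont with (P 0). apply (P_nonneg P qbar hP); lra.
  intros y.
  assert (Hy := clamp_in qbar y ltac:(lra)). assert (Hx := clamp_in qbar x ltac:(lra)).
  assert (Hl := clamp_lip qbar y x ltac:(lra)).
  set (a := clamp qbar y) in *. set (b := clamp qbar x) in *.
  assert (P0 : 0 <= P 0) by (apply (P_nonneg P qbar hP); lra).
  assert (Rabs (V P a - V P b) <= P 0 * Rabs (a - b)).
  { destruct (Rle_dec a b).
    - assert (H1 := V_bounds P qbar hP a b ltac:(lra) ltac:(lra) ltac:(lra)).
      assert (H2 := P_dec P qbar hP 0 a ltac:(lra) ltac:(lra) ltac:(lra)).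
      assert (H3 := P_nonneg P qbar hP b ltac:(lra)).
      rewrite Rabs_left1 by nra. rewrite Rabs_left1 by lra. nra.
    - assert (H1 := V_bounds P qbar hP b a ltac:(lra) ltac:(lra) ltac:(lra)).
      assert (H2 := P_dec P qbar hP 0 b ltac:(lra) ltac:(lra) ltac:(lra)).
      assert (H3 := P_nonneg P qbar hP a ltac:(lra)).
      rewrite Rabs_right by nra. rewrite Rabs_right by lra. nra. }
  eapply Rle_trans. exact H. apply Rmult_le_compat_l; auto.
Qed.

Lemma Pinv_spec P qbar (hP : demand_ok P qbar) t : 0 <= t < P 0 ->
  0 <= Pinv P qbar t <= qbar /\ P (Pinv P qbar t) = t.
Proof.
  intros Ht. unfold Pinv. apply epsilon_spec.
  assert (hq : 0 < qbar) by apply hP. assert (h0 : P qbar = 0) by apply hP.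
  destruct (IVT_cor (fun y => t - P (clamp qbar y)) 0 qbar) as [z [Hz1 Hz2]].
  - intros x. apply continuity_pt_minus. apply continuity_pt_const. intros ? ?; reflexivity.
    apply (Pc_cont P qbar hP).
  - lra.
  - rewrite !clamp_id by lra. rewrite h0. nra.
  - exists z. rewrite clamp_id in Hz2 by lra. split; [lra|lra].
Qed.

Lemma qhat_spec P qbar c th (hP : demand_ok P qbar) (hc : 0 < c) (hth : 0 <= th < P 0)
  (hA2 : A2 P qbar c th) :
  0 < qhat P qbar c <= qbar /\ V P (qhat P qbar c) - qhat P qbar c * P (qhat P qbar c) = c.
Proof.
  assert (hq : 0 < qbar) by apply hP.
  destruct (Pinv_spec P qbar hP th hth) as [Hy0 Hy1].
  set (y0 := Pinv P qbar th) in *.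
  unfold A2, TS in hA2. fold y0 in hA2.
  destruct (Req_EM_T y0 0) as [E|E]; [lra|].
  unfold qhat. apply epsilon_spec.
  destruct (IVT_cor (fun y => V P (clamp qbar y) - clamp qbar y * P (clamp qbar y) - c) 0 y0) as [z [Hz1 Hz2]].
  - intros x. apply continuity_pt_minus; [|apply continuity_pt_const; intros ? ?; reflexivity].
    apply continuity_pt_minus. apply (Vc_cont P qbar hP).
    apply continuity_pt_mult. apply lip_cont with 1. lra. intros y. rewrite Rmult_1_l. apply clamp_lip; lra.
    apply (Pc_cont P qbar hP).
  - lra.
  - rewrite !clamp_id by lra. rewrite V0. rewrite Hy1.
    assert (V P y0 - y0 * th - c > 0) by lra. rewrite Rmult_0_l. nra.
  - rewrite clamp_id in Hz2 by lra. exists z.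
    destruct (Req_dec z 0) as [->|]. rewrite V0 in Hz2. lra.
    split; lra.
Qed.


Definition gfun P c qh t y := if Rle_dec qh y then V P y - c - t * y else y * (P qh - t).

Lemma g_mono P qbar c qh t (hP : demand_ok P qbar) (hqh : 0 < qh <= qbar)
  (hqc : V P qh - qh * P qh = c) y1 y2 :
  0 <= y1 -> y1 <= y2 -> y2 <= qbar -> t <= P y2 -> t <= P qh ->
  gfun P c qh t y1 <= gfun P c qh t y2.
Proof.
  intros. unfold gfun. destruct (Rle_dec qh y1); destruct (Rle_dec qh y2).
  - assert (Hb := V_bounds P qbar hP y1 y2 ltac:(lra) ltac:(lra) ltac:(lra)). nra.
  - lra.
  - assert (Hb := V_bounds P qbar hP qh y2 ltac:(lra) ltac:(lra) ltac:(lra)). nra.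
  - nra.
Qed.

Lemma g_max P qbar c qh t (hP : demand_ok P qbar) (hqh : 0 < qh <= qbar)
  (hqc : V P qh - qh * P qh = c) e y :
  qh <= e -> e <= qbar -> P e = t -> 0 <= y <= qbar ->
  gfun P c qh t y <= gfun P c qh t e.
Proof.
  intros He1 He2 He3 Hy.
  assert (Hmain : forall z, qh <= z <= qbar -> V P z - t * z <= V P e - t * e).
  { intros z Hz. destruct (Rle_dec z e).
    - assert (Hb := V_bounds P qbar hP z e ltac:(lra) ltac:(lra) ltac:(lra)). nra.
    - assert (Hb := V_bounds P qbar hP e z ltac:(lra) ltac:(lra) ltac:(lra)). nra. }
  unfold gfun. destruct (Rle_dec qh e); [|lra]. destruct (Rle_dec qh y).
  - specialize (Hmain y ltac:(lra)). lra.
  - specialize (Hmain qh ltac:(lra)).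
    assert (P e <= P qh) by (apply (P_dec P qbar hP); lra). nra.
Qed.

Lemma g_env P qbar c qh t (hP : demand_ok P qbar) (hqh : 0 < qh <= qbar)
  (hqc : V P qh - qh * P qh = c) q r :
  0 < q <= qbar -> 0 < r <= 1 -> r * (V P q - c - t * q) <= gfun P c qh t (q * r).
Proof.
  intros Hq Hr. unfold gfun. destruct (Rle_dec qh (q * r)).
  - assert (Hb := V_bounds P qbar hP (q*r) q ltac:(nra) ltac:(nra) ltac:(lra)).
    assert (Hh := V_bounds P qbar hP qh (q*r) ltac:(lra) ltac:(lra) ltac:(nra)).
    assert (P (q*r) <= P qh) by (apply (P_dec P qbar hP); nra).
    assert (0 <= P (q * r)) by (apply (P_nonneg P qbar hP); nra).
    assert (Hhc : V P (q*r) - q*r*P (q*r) >= c) by nra.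
    assert (r * V P q <= r * V P (q*r) + r * (q - q*r) * P (q*r)) by nra.
    nra.
  - assert (V P q - c <= q * P qh).
    { destruct (Rle_dec q qh).
      + assert (Hb := V_bounds P qbar hP q qh ltac:(lra) ltac:(lra) ltac:(lra)). nra.
      + assert (Hb := V_bounds P qbar hP qh q ltac:(lra) ltac:(lra) ltac:(lra)). nra. }
    nra.
Qed.


Definition infR (E : R -> Prop) : R := real (Glb_Rbar E).

Lemma infR_fin E m z0 : (forall y, E y -> m <= y) -> E z0 -> Glb_Rbar E = Finite (infR E).
Proof.
  intros Hm Hz. unfold infR. destruct (Glb_Rbar_correct E) as [Hlb Hglb].
  destruct (Glb_Rbar E) as [l| |] eqn:Eq; simpl; auto.
  - specialize (Hlb z0 Hz). simpl in Hlb. contradiction.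
  - assert (H := Hglb (Finite m)). simpl in H. exfalso; apply H. intros y Hy. simpl. apply Hm; auto.
Qed.

Lemma infR_lb E m z : (forall y, E y -> m <= y) -> E z -> infR E <= z.
Proof.
  intros Hm Hz. assert (Hf := infR_fin E m z Hm Hz).
  destruct (Glb_Rbar_correct E) as [Hlb _]. rewrite Hf in Hlb. apply (Hlb z Hz).
Qed.

Lemma infR_glb E b z0 : E z0 -> (forall y, E y -> b <= y) -> b <= infR E.
Proof.
  intros Hz Hb. assert (Hf := infR_fin E b z0 Hb Hz).
  destruct (Glb_Rbar_correct E) as [_ Hglb]. rewrite Hf in Hglb.
  apply (Hglb (Finite b)). intros y Hy. apply Hb; auto.
Qed.

Lemma infR_approx E m z0 eps : (forall y, E y -> m <= y) -> E z0 -> 0 < eps ->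
  exists z, E z /\ z < infR E + eps.
Proof.
  intros Hm Hz He. destruct (Classical_Prop.classic (exists z, E z /\ z < infR E + eps)) as [H|H]; auto.
  exfalso. assert (infR E + eps <= infR E).
  { apply infR_glb with z0; auto. intros y Hy. destruct (Rlt_dec y (infR E + eps)); [|lra].
    exfalso; apply H; eauto. }
  lra.
Qed.

Definition GoodV (tl th : R) (f V : R -> R) : Prop :=
  V th = 0 /\ forall s t, tl <= s -> s <= t -> t <= th -> (t - s) * f t <= V s - V t.

Definition wfun (tl th : R) (f : R -> R) (x : R) : R :=
  infR (fun z => exists V, GoodV tl th f V /\ z = V x).

Definition fok (tl th : R) (f : R -> R) : Prop :=
  (forall s t, tl <= s -> s <= t -> t <= th -> f t <= f s) /\
  (forall t, tl <= t <= th -> 0 <= f t).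

Lemma good0 tl th f : tl <= th -> fok tl th f -> GoodV tl th f (fun x => (th - x) * f tl).
Proof.
  intros Hl [Hm Hp]. split. ring. intros s t Hs Hst Ht.
  assert (f t <= f tl) by (apply Hm; lra). nra.
Qed.

Lemma good_nonneg tl th f V x : fok tl th f -> GoodV tl th f V -> tl <= x <= th -> 0 <= V x.
Proof.
  intros [Hm Hp] [H0 H1] Hx. specialize (H1 x th ltac:(lra) ltac:(lra) ltac:(lra)).
  assert (0 <= f th) by (apply Hp; lra). nra.
Qed.

Lemma w_le tl th f V x : tl <= th -> fok tl th f -> GoodV tl th f V -> tl <= x <= th -> wfun tl th f x <= V x.
Proof.
  intros. unfold wfun. apply infR_lb with 0.
  - intros y [V' [HV' ->]]. apply (good_nonneg tl th f V' x); auto.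
  - eauto.
Qed.

Lemma w_ge tl th f x b : tl <= th -> fok tl th f -> tl <= x <= th ->
  (forall V, GoodV tl th f V -> b <= V x) -> b <= wfun tl th f x.
Proof.
  intros. unfold wfun. apply infR_glb with ((th - x) * f tl).
  - exists (fun x => (th - x) * f tl). split; auto. apply good0; auto.
  - intros y [V [HV ->]]. auto.
Qed.

Lemma w_th tl th f : tl <= th -> fok tl th f -> wfun tl th f th = 0.
Proof.
  intros. apply Rle_antisym.
  - assert (H1 := w_le tl th f _ th H H0 (good0 tl th f H H0) ltac:(lra)). simpl in H1. lra.
  - apply w_ge; auto. lra. intros V [HV _]. lra.
Qed.

Lemma w_nonneg tl th f x : tl <= th -> fok tl th f -> tl <= x <= th -> 0 <= wfun tl th f x.
Proof. intros. apply w_ge; auto. intros V HV. apply (good_nonneg tl th f V x); auto. Qed.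

Lemma w_low tl th f s t : tl <= th -> fok tl th f -> tl <= s -> s <= t -> t <= th ->
  (t - s) * f t <= wfun tl th f s - wfun tl th f t.
Proof.
  intros. assert (wfun tl th f t + (t - s) * f t <= wfun tl th f s); [|lra].
  apply w_ge; auto. lra. intros V HV.
  assert (H4 := w_le tl th f V t H H0 HV ltac:(lra)).
  destruct HV as [_ HV]. specialize (HV s t H1 H2 H3). lra.
Qed.

Lemma w_glue tl th f (U : R -> R) s t : tl <= th -> fok tl th f -> tl <= s -> s <= t -> t <= th ->
  (forall a b, s <= a -> a <= b -> b <= t -> (b - a) * f b <= U a - U b) ->
  wfun tl th f s <= U s - U t + wfun tl th f t.
Proof.
  intros Hlh Hf Hs Hst Ht HU.
  assert (wfun tl th f s - U s + U t <= wfun tl th f t); [|lra].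
  apply w_ge; auto. lra. intros V HV.
  set (V' := fun x => if Rle_dec t x then V x else if Rle_dec s x then U x - U t + V t
                      else U s - U t + V t + (s - x) * f tl).
  assert (HV' : GoodV tl th f V').
  { destruct HV as [HV0 HV1]. destruct Hf as [Hm Hp]. split.
    - unfold V'. destruct (Rle_dec t th); [auto|lra].
    - intros a b Ha Hab Hb. unfold V'.
      assert (Hfb : f b <= f tl) by (apply Hm; lra).
      assert (Hfb0 : 0 <= f b) by (apply Hp; lra).
      destruct (Rle_dec t a); destruct (Rle_dec t b); try lra.
      + apply HV1; lra.
      + destruct (Rle_dec s a).
        * assert (H1 := HU a t ltac:(lra) ltac:(lra) ltac:(lra)).
          assert (H2 := HV1 t b ltac:(lra) ltac:(lra) ltac:(lra)).
          assert (f b <= f t) by (apply Hm; lra). nra.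
        * assert (H1 := HU s t ltac:(lra) ltac:(lra) ltac:(lra)).
          assert (H2 := HV1 t b ltac:(lra) ltac:(lra) ltac:(lra)).
          assert (f b <= f t) by (apply Hm; lra). nra.
      + destruct (Rle_dec s a); destruct (Rle_dec s b); try lra.
        * apply Rle_trans with (U a - U b); [apply HU; lra | lra].
        * assert (H1 := HU s b ltac:(lra) ltac:(lra) ltac:(lra)). nra.
        * nra. }
  assert (H := w_le tl th f V' s Hlh Hf HV' ltac:(lra)).
  unfold V' in H. destruct (Rle_dec t s).
  - assert (s = t) by lra. subst. lra.
  - destruct (Rle_dec s s); lra.
Qed.

Lemma w_up tl th f s t : tl <= th -> fok tl th f -> tl <= s -> s <= t -> t <= th ->
  wfun tl th f s - wfun tl th f t <= (t - s) * f s.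
Proof.
  intros. assert (H4 := w_glue tl th f (fun x => (t - x) * f s) s t H H0 H1 H2 H3).
  simpl in H4. assert (wfun tl th f s <= (t - s) * f s + wfun tl th f t); [|lra].
  eapply Rle_trans. apply H4. intros a b Ha Hab Hb.
  destruct H0 as [Hm _]. assert (f b <= f s) by (apply Hm; lra). nra. lra.
Qed.


Lemma lc_ext (f : R -> R) t : filterlim f (at_left t) (locally (f t)) ->
  forall eps, 0 < eps -> exists d, 0 < d /\ forall y, t - d < y < t -> Rabs (f y - f t) < eps.
Proof.
  intros H eps He. apply filterlim_locally with (eps := mkposreal _ He) in H.
  destruct H as [d Hd]. exists d. split. apply cond_pos.
  intros y Hy. specialize (Hd y). apply ballR in Hd. exact Hd.
  apply ballR. rewrite Rabs_left1; lra. lra.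
Qed.

Lemma lc_int (f : R -> R) t : (forall eps, 0 < eps -> exists d, 0 < d /\ forall y, t - d < y < t -> Rabs (f y - f t) < eps) ->
  filterlim f (at_left t) (locally (f t)).
Proof.
  intros H. apply filterlim_locally. intros eps.
  destruct (H eps (cond_pos eps)) as [d [Hd Hy]].
  exists (mkposreal _ Hd). intros y Hb Hlt. apply ballR in Hb. apply Rabs_def2 in Hb. simpl in Hb.
  apply ballR. apply Hy. unfold minus, plus, opp in Hb; simpl in Hb. lra.
Qed.

Definition mfun (x xt : R -> R) t := Rmin (x t) (xt t).

Definition xpf (tl th : R) (x xt : R -> R) (t : R) : R :=
  if Rle_dec t tl then x tl
  else infR (fun z => exists s, tl <= s /\ s < t /\ s <= th /\ z = mfun x xt s).

Lemma xp_inf_lb tl th x xt t s : tl < t -> tl <= s -> s < t -> s <= th ->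
  fok tl th x -> fok tl th xt -> xpf tl th x xt t <= mfun x xt s.
Proof.
  intros. unfold xpf. destruct (Rle_dec t tl); [lra|].
  apply infR_lb with 0.
  - intros y [s' [? [? [? ->]]]]. unfold mfun. destruct H3 as [_ H3]; destruct H4 as [_ H4].
    apply Rmin_glb; [apply H3|apply H4]; lra.
  - eauto.
Qed.

Lemma xp_inf_glb tl th x xt t b : tl < t -> tl <= th ->
  (forall s, tl <= s -> s < t -> s <= th -> b <= mfun x xt s) -> b <= xpf tl th x xt t.
Proof.
  intros. unfold xpf. destruct (Rle_dec t tl); [lra|].
  apply infR_glb with (mfun x xt tl).
  - exists tl. repeat split; lra.
  - intros y [s' [? [? [? ->]]]]. auto.
Qed.

Lemma xp_nonneg tl th x xt t : tl <= th -> fok tl th x -> fok tl th xt -> 0 <= xpf tl th x xt t.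
Proof.
  intros Hl Hx Hxt. destruct (Rle_dec t tl) as [|n].
  - unfold xpf. destruct (Rle_dec t tl); [|lra]. apply Hx; lra.
  - apply xp_inf_glb; try lra. intros s ? ? ?. unfold mfun.
    apply Rmin_glb; [apply Hx|apply Hxt]; lra.
Qed.

Lemma xp_tl tl th x xt : xpf tl th x xt tl = x tl.
Proof. unfold xpf. destruct (Rle_dec tl tl); [auto|lra]. Qed.

Lemma xp_ge_m tl th x xt t : tl <= t <= th -> fok tl th x -> fok tl th xt ->
  mfun x xt t <= xpf tl th x xt t.
Proof.
  intros Ht Hx Hxt. destruct (Rle_dec t tl).
  - assert (t = tl) by lra. subst. rewrite xp_tl. unfold mfun. apply Rmin_l.
  - apply xp_inf_glb; try lra. intros s ? ? ?. unfold mfun.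
    destruct Hx as [Hx _]; destruct Hxt as [Hxt _].
    assert (x t <= x s) by (apply Hx; lra). assert (xt t <= xt s) by (apply Hxt; lra).
    unfold Rmin. repeat destruct Rle_dec; lra.
Qed.

Lemma xp_le_xt tl th x xt s t : tl <= s -> s < t -> s <= th -> fok tl th x -> fok tl th xt ->
  xpf tl th x xt t <= xt s.
Proof.
  intros. eapply Rle_trans. apply (xp_inf_lb tl th x xt t s); auto; lra. apply Rmin_r.
Qed.

Lemma xp_mono tl th x xt s t : tl <= th -> tl <= s -> s <= t -> t <= th -> fok tl th x -> fok tl th xt ->
  xpf tl th x xt t <= xpf tl th x xt s.
Proof.
  intros Hl Hs Hst Ht Hx Hxt. destruct (Rle_dec t tl).
  - assert (s = tl) by lra. assert (t = tl) by lra. subst. lra.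
  - destruct (Rle_dec s tl).
    + assert (s = tl) by lra. subst. rewrite xp_tl.
      eapply Rle_trans. apply (xp_inf_lb tl th x xt t tl); auto; lra. apply Rmin_l.
    + apply xp_inf_glb; try lra. intros s' ? ? ?. apply xp_inf_lb; auto; lra.
Qed.

Lemma xp_fok tl th x xt : tl <= th -> fok tl th x -> fok tl th xt -> fok tl th (xpf tl th x xt).
Proof.
  intros. split.
  - intros. apply xp_mono; auto.
  - intros. apply xp_nonneg; auto.
Qed.

Lemma xp_le_x tl th x xt t : tl <= t <= th -> fok tl th x -> fok tl th xt ->
  (tl < t -> filterlim x (at_left t) (locally (x t))) -> xpf tl th x xt t <= x t.
Proof.
  intros Ht Hx Hxt Hlc. destruct (Rle_dec t tl).
  - assert (t = tl) by lra. subst. rewrite xp_tl. lra.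
  - assert (Hlc' := lc_ext x t (Hlc ltac:(lra))).
    apply Rnot_lt_le. intros Hc.
    destruct (Hlc' (xpf tl th x xt t - x t) ltac:(lra)) as [d [Hd Hy]].
    set (y := Rmax tl (t - d / 2)).
    assert (Hy1 : tl <= y) by apply Rmax_l.
    assert (Hy2 : y < t). { unfold y, Rmax. destruct Rle_dec; lra. }
    assert (Hy3 : t - d < y). { unfold y, Rmax. destruct Rle_dec; lra. }
    specialize (Hy y ltac:(lra)).
    assert (H1 := xp_inf_lb tl th x xt t y ltac:(lra) Hy1 Hy2 ltac:(lra) Hx Hxt).
    assert (mfun x xt y <= x y) by apply Rmin_l.
    apply Rabs_def2 in Hy. lra.
Qed.

Lemma xp_lc tl th x xt t : tl < t <= th -> fok tl th x -> fok tl th xt ->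
  filterlim (xpf tl th x xt) (at_left t) (locally (xpf tl th x xt t)).
Proof.
  intros Ht Hx Hxt. apply lc_int. intros eps He.
  destruct (Classical_Prop.classic (exists s, tl <= s /\ s < t /\ s <= th /\ mfun x xt s < xpf tl th x xt t + eps)) as [[s [H1 [H2 [H3 H4]]]]|Hn].
  - exists (t - s). split. lra. intros y Hy.
    assert (Ha := xp_inf_lb tl th x xt y s ltac:(lra) H1 ltac:(lra) H3 Hx Hxt).
    assert (Hb := xp_mono tl th x xt y t ltac:(lra) ltac:(lra) ltac:(lra) ltac:(lra) Hx Hxt).
    rewrite Rabs_right; lra.
  - exfalso. assert (xpf tl th x xt t + eps <= xpf tl th x xt t); [|lra].
    apply xp_inf_glb; try lra. intros s ? ? ?.
    destruct (Rlt_dec (mfun x xt s) (xpf tl th x xt t + eps)); [|lra].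
    exfalso; apply Hn; eauto.
Qed.


Lemma IC_bounds tl th r q u s t : IC tl th r q u -> tl <= s -> s <= t -> t <= th ->
  (t - s) * (q t * r t) <= u s - u t <= (t - s) * (q s * r s).
Proof.
  intros H Hs Hst Ht.
  assert (H1 := H s t ltac:(split; lra) ltac:(split; lra)).
  assert (H2 := H t s ltac:(split; lra) ltac:(split; lra)).
  split; nra.
Qed.

Lemma IC_fok qbar tl th r q u : is_mech qbar tl th r q u -> IC tl th r q u ->
  fok tl th (fun t => q t * r t).
Proof.
  intros Hm HI. split.
  - intros s t Hs Hst Ht. destruct (Req_dec s t) as [->|]; [lra|].
    assert (Hb := IC_bounds tl th r q u s t HI Hs Hst Ht).
    apply Rmult_le_reg_l with (t - s). lra. lra.
  - intros t Ht. destruct (Hm t Ht) as [[? ?] [[? ?] _]]. nra.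
Qed.

Lemma limit_arg a b X D : a < b -> 0 <= X -> (forall c, a < c < b -> (c - a) * X <= D) -> (b - a) * X <= D.
Proof.
  intros Hab HX H. apply Rnot_lt_le. intros Hc.
  destruct (Req_dec X 0) as [->|HX0].
  - specialize (H ((a+b)/2) ltac:(lra)). lra.
  - set (d := Rmin ((b - a) / 2) (((b - a) * X - D) / (2 * X))).
    assert (Hd1 : d <= (b - a) / 2) by apply Rmin_l.
    assert (Hd2 : d <= ((b - a) * X - D) / (2 * X)) by apply Rmin_r.
    assert (Hd0 : 0 < d).
    { unfold d. apply Rmin_glb_lt. lra. apply Rdiv_lt_0_compat; lra. }
    assert (Hd3 : d * X <= ((b - a) * X - D) / 2).
    { apply Rmult_le_compat_r with (r := X) in Hd2; [|lra].
      replace (((b - a) * X - D) / (2 * X) * X) with (((b - a) * X - D) / 2) in Hd2 by (field; lra).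
      lra. }
    specialize (H (b - d) ltac:(lra)). nra.
Qed.


Theorem theorem5 (P : R -> R) (qbar c tl th alpha : R)
  (hP : demand_ok P qbar) (hc : 0 < c)
  (htl : 0 < tl) (htlth : tl < th)
  (hrange : th < P 0) (* P^{-1}(th) exists, presupposed by (A2) *)
  (hA2 : A2 P qbar c th)
  (halpha : 0 <= alpha < 1)
  (r q u : R -> R)
  (hfr : floor_randomized P qbar c tl th r q u)
  (hlc : left_continuous tl th r q)
  (hdd : DD P qbar tl th q)
  (hdom : dominated P qbar c tl th alpha r q u) :
  exists r' q' u' : R -> R,
    floor_randomized P qbar c tl th r' q' u' /\
    left_continuous tl th r' q' /\
    DD P qbar tl th q' /\
    dominates P qbar c tl th alpha r' q' u' r q u /\
    (forall t, inTheta tl th t -> q' t * r' t <= q t * r t).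
Proof.
  destruct hfr as [[Hmech [HIC HIR]] [Hu0 [T1 [T01 [T0 [HI1 [HI01 [HI0 [Hpart [Hd1 [Hd2 [Hd3 [Ho1 [Ho2 [HT1 [HT01 HT0]]]]]]]]]]]]]]]].
  destruct hdom as [rt [qt [ut [[Hmt [HICt HIRt]] [_ [Hge [t0 [Ht0 Hstr]]]]]]]].
  destruct hdd as [Hdd1 Hdd2].
  assert (hq0 : 0 < qbar) by apply hP.
  destruct (qhat_spec P qbar c th hP hc ltac:(lra) hA2) as [Hqh1 Hqh2].
  set (qh := qhat P qbar c) in *.
  assert (Hqe : forall t, inTheta tl th t -> 0 <= q_e P qbar t <= qbar /\ P (q_e P qbar t) = t).
  { intros t [? ?]. apply Pinv_spec; auto. lra. }
  set (x := fun t => q t * r t).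
  set (xt := fun t => qt t * rt t).
  assert (Hfx : fok tl th x) by (apply (IC_fok qbar tl th r q u); auto).
  assert (Hfxt : fok tl th xt) by (apply (IC_fok qbar tl th rt qt ut); auto).
  set (xp := xpf tl th x xt).
  assert (Hfxp : fok tl th xp) by (apply xp_fok; auto; lra).
  assert (Hxp0 : forall t, 0 <= xp t) by (intros; apply xp_nonneg; auto; lra).
  assert (Hxpx : forall t, inTheta tl th t -> xp t <= x t).
  { intros t Ht. apply xp_le_x; auto. intros. apply hlc. destruct Ht; lra. }
  set (w := wfun tl th xp).
  assert (HM : forall t, inTheta tl th t ->
     0 <= x t <= q t /\ q t <= q_e P qbar t /\ (0 < x t -> qh <= q t) /\
     r t * TS P c t (q t) = gfun P c qh t (x t)).
  { intros t Ht. destruct (Hmech t Ht) as [[Hr0 Hr1] [[Hq0 Hq1] Hqr]].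
    assert (Hx : 0 <= x t <= q t) by (unfold x; split; nra).
    assert (Hqe' := Hdd1 t Ht).
    destruct (proj1 (Hpart t) Ht) as [H|[H|H]].
    - destruct (HT1 t H) as [Ha Hb]. repeat split; try (intros; lra).
      unfold TS, gfun, x. rewrite Hb, Rmult_1_r, Rmult_1_l.
      destruct (Req_EM_T (q t) 0); [lra|]. destruct (Rle_dec qh (q t)); lra.
    - destruct (HT01 t H) as [Ha Hb]. repeat split; try (intros; lra).
      unfold TS, gfun, x. rewrite Ha.
      destruct (Req_EM_T qh 0); [lra|]. destruct (Rle_dec qh (qh * r t)); [nra|].
      nra.
    - destruct (HT0 t H) as [Ha Hb]. repeat split; try (intros; lra).
      unfold TS, gfun, x. rewrite Hb, Rmult_0_l, Rmult_0_r.
      destruct (Rle_dec qh 0); lra. }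
  assert (HMt : forall t, inTheta tl th t ->
     rt t * TS P c t (qt t) <= gfun P c qh t (xt t) /\ 0 <= xt t <= qbar).
  { intros t Ht. destruct (Hmt t Ht) as [[Hr0 Hr1] [[Hq0 Hq1] Hqr]].
    unfold xt. split; [|split; nra].
    destruct (Req_dec (qt t) 0) as [E|E].
    - rewrite (proj1 Hqr E). unfold gfun, TS. rewrite E, Rmult_0_l.
      repeat destruct Req_EM_T; repeat destruct Rle_dec; nra.
    - assert (rt t <> 0) by (intro; apply E; apply Hqr; auto).
      unfold TS. destruct (Req_EM_T (qt t) 0); [lra|].
      apply (g_env P qbar c qh t hP Hqh1 Hqh2); lra. }
  set (q' := fun t => if Rle_dec qh (xp t) then xp t else if Rlt_dec 0 (xp t) then qh else 0).
  set (r' := fun t => if Rle_dec qh (xp t) then 1 else if Rlt_dec 0 (xp t) then xp t / qh else 0).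
  assert (Hqr' : forall t, q' t * r' t = xp t).
  { intros t. unfold q', r'. specialize (Hxp0 t).
    destruct (Rle_dec qh (xp t)); [ring|]. destruct (Rlt_dec 0 (xp t)); [field; lra|lra]. }
  assert (Hrs' : forall t, r' t * TS P c t (q' t) = gfun P c qh t (xp t)).
  { intros t. unfold q', r', TS, gfun. specialize (Hxp0 t).
    destruct (Rle_dec qh (xp t)).
    - destruct (Req_EM_T (xp t) 0); [lra|ring].
    - destruct (Rlt_dec 0 (xp t)).
      + destruct (Req_EM_T qh 0); [lra|]. field_simplify; [|lra]. rewrite <- Hqh2. field. lra.
      + destruct (Req_EM_T 0 0); [|lra]. assert (xp t = 0) by lra. rewrite H. ring. }
  assert (Hucond : forall a b, tl <= a -> a <= b -> b <= th -> (b - a) * xp b <= u a - u b).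
  { intros a b Ha Hab Hb. assert (H1 := IC_bounds tl th r q u a b HIC Ha Hab Hb).
    assert (H2 := Hxpx b ltac:(split; lra)). unfold x in H2. nra. }
  assert (Hutcond : forall a b, tl <= a -> a <= b -> b <= th -> (b - a) * xp b <= ut a - ut b).
  { intros a b Ha Hab Hb. destruct (Req_dec a b) as [->|Hne]; [lra|].
    apply limit_arg; [lra|apply Hxp0|]. intros c' Hc.
    assert (H1 := IC_bounds tl th rt qt ut a c' HICt Ha ltac:(lra) ltac:(lra)).
    assert (H2 := IC_bounds tl th rt qt ut c' b HICt ltac:(lra) ltac:(lra) Hb).
    assert (H3 := xp_le_xt tl th x xt c' b ltac:(lra) ltac:(lra) ltac:(lra) Hfx Hfxt).
    assert (H4 : 0 <= xt b) by (apply Hfxt; lra). fold xp in H3. unfold xt in *. nra. }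
  assert (Hlh : tl <= th) by lra.
  assert (Hwth : w th = 0) by (apply w_th; auto).
  assert (Hwu : forall t, inTheta tl th t -> w t <= u t).
  { intros t [Ha Hb]. assert (Hg := w_glue tl th xp u t th Hlh Hfxp Ha Hb ltac:(lra)
       ltac:(intros; apply Hucond; lra)). fold w in Hg. lra. }
  assert (Hwu2 : forall t, inTheta tl th t -> w tl <= u tl - u t + w t).
  { intros t [Ha Hb]. apply (w_glue tl th xp u tl t Hlh Hfxp); try lra. intros; apply Hucond; lra. }
  assert (Hwut : forall t, inTheta tl th t -> w t <= ut t - ut th).
  { intros t [Ha Hb]. assert (Hg := w_glue tl th xp ut t th Hlh Hfxp Ha Hb ltac:(lra)
       ltac:(intros; apply Hutcond; lra)). fold w in Hg. lra. }
  assert (Hwut2 : forall t, inTheta tl th t -> w tl <= ut tl - ut t + w t).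
  { intros t [Ha Hb]. apply (w_glue tl th xp ut tl t Hlh Hfxp); try lra. intros; apply Hutcond; lra. }
  assert (Hutth : 0 <= ut th) by (apply Rge_le, HIRt; split; lra).
  assert (Hdomle : forall t, inTheta tl th t ->
      RS P c alpha t r' q' w >= RS P c alpha t r q u).
  { intros t Ht. unfold RS. rewrite Hrs'. destruct (HM t Ht) as [Hx1 [Hx2 [Hx3 Hx4]]]. rewrite Hx4.
    assert (Hp := Hxpx t Ht). assert (Hwu' := Hwu t Ht).
    destruct (Req_dec (xp t) (x t)) as [E|E].
    - rewrite E. nra.
    - assert (Hm := xp_ge_m tl th x xt t Ht Hfx Hfxt). fold xp in Hm. unfold mfun in Hm.
      assert (Hlt : xp t < x t) by lra.
      assert (Hxtle : xt t <= xp t).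
      { revert Hm. unfold Rmin. destruct Rle_dec; lra. }
      assert (Hxpos : 0 < x t) by (specialize (Hxp0 t); lra).
      destruct (Hqe t Ht) as [Hqe1 Hqe2].
      assert (Hg : gfun P c qh t (xt t) <= gfun P c qh t (xp t)).
      { apply (g_mono P qbar c qh t hP Hqh1 Hqh2).
        - destruct (HMt t Ht); lra.
        - lra.
        - lra.
        - rewrite <- Hqe2 at 1. apply (P_dec P qbar hP); [apply Hxp0|lra|lra].
        - rewrite <- Hqe2 at 1. apply (P_dec P qbar hP); [lra| specialize (Hx3 Hxpos); lra |lra]. }
      assert (Hgt := Hge t Ht). unfold RS in Hgt.
      destruct (HMt t Ht) as [Henv _].
      assert (Hwut' := Hwut t Ht). nra. }
  assert (Htlin : inTheta tl th tl) by (split; lra).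
  assert (Htlcase : (x tl = q_e P qbar tl /\ qh <= q_e P qbar tl) \/
                    (q_e P qbar tl = qh /\ q tl = qh /\ 0 < x tl < qh)).
  { destruct (proj1 (Hpart tl) Htlin) as [H|[H|H]].
    - destruct (HT1 tl H) as [Ha Hb]. left. unfold x. rewrite Hb, <- Hdd2. lra.
    - destruct (HT01 tl H) as [Ha Hb]. right. unfold x. rewrite Ha, <- Hdd2, Ha. split; [auto|split; [auto|nra]].
    - destruct (HT0 tl H) as [Ha Hb]. exfalso. destruct (Hqe tl Htlin) as [_ He].
      rewrite <- Hdd2, Ha in He. lra. }
  assert (Hmax : forall y, 0 <= y <= qbar -> gfun P c qh tl y <= gfun P c qh tl (x tl)).
  { intros y Hy. destruct (Hqe tl Htlin) as [He1 He2]. destruct Htlcase as [[Ha Hb]|[Ha [Hb Hc]]].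
    - rewrite Ha. apply (g_max P qbar c qh tl hP Hqh1 Hqh2); lra.
    - assert (H1 := g_max P qbar c qh tl hP Hqh1 Hqh2 qh y ltac:(lra) ltac:(lra) ltac:(rewrite <- Ha; auto) Hy).
      rewrite Ha in He2.
      assert (E1 : gfun P c qh tl qh = 0).
      { unfold gfun. destruct (Rle_dec qh qh); [|lra]. rewrite <- Hqh2, He2. ring. }
      assert (E2 : gfun P c qh tl (x tl) = 0).
      { unfold gfun. destruct (Rle_dec qh (x tl)); [lra|]. rewrite He2. ring. }
      lra. }
  assert (Hstrict : exists t, inTheta tl th t /\ RS P c alpha t r' q' w > RS P c alpha t r q u).
  { destruct (Rlt_dec (w tl) (u tl)) as [Hlt|Hnlt].
    - exists tl. split; auto. unfold RS. rewrite Hrs'. destruct (HM tl Htlin) as [_ [_ [_ Hx4]]].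
      rewrite Hx4. unfold xp. rewrite xp_tl. nra.
    - exfalso. assert (Hwtl : w tl = u tl) by (assert (H := Hwu tl Htlin); lra).
      assert (Huw : forall t, inTheta tl th t -> u t = w t).
      { intros t Ht. assert (H1 := Hwu t Ht). assert (H2 := Hwu2 t Ht). lra. }
      assert (Hutl : ut tl <= u tl).
      { assert (H1 := Hge tl Htlin). unfold RS in H1. destruct (HM tl Htlin) as [_ [_ [_ Hx4]]].
        rewrite Hx4 in H1. destruct (HMt tl Htlin) as [H2 H3]. assert (H4 := Hmax (xt tl) H3). nra. }
      assert (H5 := Hwut tl Htlin).
      assert (Hutw : forall t, inTheta tl th t -> ut t = u t).
      { intros t Ht. assert (H1 := Hwut2 t Ht). assert (H2 := Hwut t Ht). assert (H3 := Huw t Ht). lra. }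
      assert (Hg0 : gfun P c qh t0 (xt t0) > gfun P c qh t0 (x t0)).
      { unfold RS in Hstr. destruct (HM t0 Ht0) as [_ [_ [_ Hx4]]]. rewrite Hx4 in Hstr.
        destruct (HMt t0 Ht0) as [H2 _]. rewrite (Hutw t0 Ht0) in Hstr. nra. }
      destruct (Req_dec t0 tl) as [E|Hne].
      { subst t0. destruct (HMt tl Htlin) as [_ H3]. assert (H4 := Hmax (xt tl) H3). lra. }
      assert (Ht0' : tl < t0 <= th) by (destruct Ht0; lra).
      assert (Hxx : x t0 < xt t0).
      { apply Rnot_le_lt. intros Hle. destruct (HM t0 Ht0) as [Hx1 [Hx2 [Hx3 _]]].
        destruct (HMt t0 Ht0) as [_ H3].
        destruct (Req_dec (x t0) 0) as [E0|E0].
        - assert (xt t0 = 0) by lra. rewrite H, E0 in Hg0. lra.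
        - destruct (Hqe t0 Ht0) as [Hqe1 Hqe2].
          assert (gfun P c qh t0 (xt t0) <= gfun P c qh t0 (x t0)); [|lra].
          apply (g_mono P qbar c qh t0 hP Hqh1 Hqh2); try lra.
          + rewrite <- Hqe2 at 1. apply (P_dec P qbar hP); lra.
          + rewrite <- Hqe2 at 1. apply (P_dec P qbar hP); try lra; specialize (Hx3 ltac:(lra)); lra. }
      destruct (lc_ext x t0 (hlc t0 Ht0') (xt t0 - x t0) ltac:(lra)) as [d [Hd Hy]].
      set (y := Rmax tl (t0 - d / 2)).
      assert (Hy1 : tl <= y) by apply Rmax_l.
      assert (Hy2 : y < t0). { unfold y, Rmax. destruct Rle_dec; lra. }
      assert (Hy3 : t0 - d < y). { unfold y, Rmax. destruct Rle_dec; lra. }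
      specialize (Hy y ltac:(lra)). apply Rabs_def2 in Hy.
      assert (H1 := IC_bounds tl th r q u y t0 HIC Hy1 ltac:(lra) ltac:(lra)).
      assert (H2 := IC_bounds tl th rt qt ut y t0 HICt Hy1 ltac:(lra) ltac:(lra)).
      rewrite (Hutw y ltac:(split; lra)), (Hutw t0 Ht0) in H2.
      unfold x, xt in *. nra. }
  assert (HICIR' : IC_IR qbar tl th r' q' w).
  { split; [|split].
    - intros t Ht. unfold q', r'. specialize (Hxp0 t). assert (Hp := Hxpx t Ht).
      destruct (HM t Ht) as [Hx1 [Hx2 [Hx3 _]]]. destruct (Hmech t Ht) as [_ [[_ Hq1] _]].
      destruct (Rle_dec qh (xp t)).
      + split; [lra|]. split; [lra|]. split; intros; lra.
      + destruct (Rlt_dec 0 (xp t)).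
        * split. split. apply Rlt_le, Rdiv_lt_0_compat; lra.
          apply Rlt_le. apply Rmult_lt_reg_r with qh. lra. unfold Rdiv. rewrite Rmult_assoc, Rinv_l; lra.
          split; [lra|]. split; intros; [lra|].
          exfalso. assert (0 < xp t / qh) by (apply Rdiv_lt_0_compat; lra). lra.
        * split; [lra|]. split; [lra|]. split; intros; lra.
    - intros t t' Ht Ht'. rewrite Rmult_assoc, Hqr'. destruct Ht as [Ht1 Ht2]. destruct Ht' as [Ht1' Ht2'].
      destruct (Rle_dec t t').
      + assert (H := w_low tl th xp t t' Hlh Hfxp Ht1 r0 Ht2'). fold w in H. lra.
      + assert (H := w_up tl th xp t' t Hlh Hfxp Ht1' ltac:(lra) Ht2). fold w in H. lra.
    - intros t [Ht1 Ht2]. apply Rle_ge. apply w_nonneg; auto. }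
  assert (HFR : floor_randomized P qbar c tl th r' q' w).
  { split; [exact HICIR'|]. split; [exact Hwth|].
    exists (fun t => inTheta tl th t /\ qh <= xp t),
           (fun t => inTheta tl th t /\ 0 < xp t < qh),
           (fun t => inTheta tl th t /\ xp t = 0).
    destruct Hfxp as [Hmono _].
    split; [|split; [|split; [|split; [|split; [|split; [|split; [|split; [|split; [|split; [|split]]]]]]]]]].
    - intros a b d [[Ha1 Ha2] Ha] [[Hd1' Hd2'] Hd] Hb. split. split; lra.
      assert (xp d <= xp b) by (apply Hmono; lra). lra.
    - intros a b d [[Ha1 Ha2] Ha] [[Hd1' Hd2'] Hd] Hb. split. split; lra.
      assert (xp d <= xp b) by (apply Hmono; lra). assert (xp b <= xp a) by (apply Hmono; lra). lra.
    - intros a b d [[Ha1 Ha2] Ha] [[Hd1' Hd2'] Hd] Hb. split. split; lra.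
      assert (xp b <= xp a) by (apply Hmono; lra). specialize (Hxp0 b). lra.
    - intros t. split.
      + intros Ht. specialize (Hxp0 t). destruct (Rle_dec qh (xp t)); [left; auto|right].
        destruct (Req_dec (xp t) 0); [right; auto|left; split; auto; lra].
      + intros [[? ?]|[[? ?]|[? ?]]]; auto.
    - intros t [[_ ?] [_ ?]]. lra.
    - intros t [[_ ?] [_ ?]]. lra.
    - intros t [[_ ?] [_ ?]]. lra.
    - intros a b [[Ha1 Ha2] Ha] [[Hb1 Hb2] Hb]. apply Rnot_le_lt. intros Hle.
      assert (xp a <= xp b) by (apply Hmono; lra). lra.
    - intros a b [[Ha1 Ha2] Ha] [[Hb1 Hb2] Hb]. apply Rnot_le_lt. intros Hle.
      assert (xp a <= xp b) by (apply Hmono; lra). lra.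
    - intros t [_ Ht]. unfold q', r'. destruct (Rle_dec qh (xp t)); [|lra]. fold qh. split; lra.
    - intros t [_ Ht]. unfold q', r'. fold qh. destruct (Rle_dec qh (xp t)); [lra|].
      destruct (Rlt_dec 0 (xp t)); [|lra]. split; auto. split.
      apply Rdiv_lt_0_compat; lra.
      apply Rmult_lt_reg_r with qh. lra. unfold Rdiv. rewrite Rmult_assoc, Rinv_l; lra.
    - intros t [_ Ht]. unfold q', r'. destruct (Rle_dec qh (xp t)); [lra|].
      destruct (Rlt_dec 0 (xp t)); [lra|]. split; auto. }
  exists r', q', w. split; [exact HFR|]. split; [|split; [|split; [|]]].
  - intros t Ht. apply (filterlim_ext xp). intros; rewrite Hqr'; auto.
    rewrite Hqr'. apply xp_lc; auto.
  - split.
    + intros t Ht. unfold q'. specialize (Hxp0 t). assert (Hp := Hxpx t Ht).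
      destruct (HM t Ht) as [Hx1 [Hx2 [Hx3 _]]].
      destruct (Rle_dec qh (xp t)); [lra|]. destruct (Rlt_dec 0 (xp t)).
      * specialize (Hx3 ltac:(lra)). lra.
      * lra.
    + unfold q'. assert (Hxptl : xp tl = x tl) by (unfold xp; apply xp_tl). rewrite !Hxptl. rewrite <- Hdd2.
      destruct Htlcase as [[Ha Hb]|[Ha [Hb Hc]]].
      * destruct (Rle_dec qh (x tl)); [|lra]. rewrite <- Hdd2 in Ha. auto.
      * destruct (Rle_dec qh (x tl)); [lra|]. destruct (Rlt_dec 0 (x tl)); [|lra]. auto.
  - split; [exact HICIR'|]. split; [split; [exact Hmech|split; auto]|]. split; [exact Hdomle|exact Hstrict].
  - intros t Ht. rewrite Hqr'. apply Hxpx; auto.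
Qed.
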